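(* Let $\beta>0$. Suppose $\psi\in C^\infty(\mathbb{R})$ is supported on $[0,1]$ with $\|\psi\|_2=1$ and $\int\psi=0$, and let $m$ be a positive integer. For $1\le j\le m$ let $\psi_j(x)=m^{1/2}\psi(mx-j+1)$. For $\rho>0$ and $\kappa\in\{-1,1\}^m$ define $V_\kappa(x)=1+\rho\sum_{j=1}^m\kappa_j\psi_j(x)$ for $x\in[0,1]$. If $\rho m^{1/2+q}\|\psi^{(q)}\|_\infty\le1$ for all $q\in\{0,1,\dots,\lfloor\beta\rfloor\}$ and $\rho m^{1/2+\beta}\big(4\|\psi^{(\lfloor\beta\rfloor)}\|_\infty\vee2\|\psi^{(\lfloor\beta\rfloor+1)}\|_\infty\big)\le1$, then $V_\kappa\in\mathcal{V}_{1,\beta}(m^{1/2}\rho)$.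
   Context: $\mathcal{H}_\beta=\mathcal{H}_\beta(M)$: functions $g:[0,1]\to\mathbb{R}$ with $|g^{(\lfloor\beta\rfloor)}(x)-g^{(\lfloor\beta\rfloor)}(y)|\le M|x-y|^{\beta-\lfloor\beta\rfloor}$ for all $x,y\in[0,1]$ and $\|g^{(k)}\|_\infty\le M$ for $k=0,\dots,\lfloor\beta\rfloor$; $M$ is a fixed sufficiently large constant (in particular $M\ge1$). $\mathcal{V}_{1,\beta}(\varepsilon)=\{V\in\mathcal{H}_\beta:V\ge0,\ \|V-\bar V\mathbf 1\|_2\ge\varepsilon\}$ with $\bar V=\int_0^1V(x)dx$, $\mathbf1\equiv1$ on $[0,1]$, and $\|\cdot\|_2$ the $L^2([0,1])$ norm. *)

(* Defs.v *)
From Stdlib Require Import Reals Lra.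
From Coquelicot Require Import Coquelicot.
Open Scope R_scope.

Definition flr (b : R) : nat := Z.to_nat (Int_part b).

Definition supnorm (f : R -> R) : R :=
  real (Lub_Rbar (fun y => exists x, y = Rabs (f x))).

Definition smooth (f : R -> R) : Prop := forall n x, ex_derive_n f n x.

Definition Holder (beta M : R) (g : R -> R) : Prop :=
  (forall k x, (k <= flr beta)%nat -> 0 <= x <= 1 -> ex_derive_n g k x) /\
  (forall k x, (k <= flr beta)%nat -> 0 <= x <= 1 -> Rabs (Derive_n g k x) <= M) /\
  (forall x y, 0 <= x <= 1 -> 0 <= y <= 1 ->
     Rabs (Derive_n g (flr beta) x - Derive_n g (flr beta) y)
       <= M * Rpower (Rabs (x - y)) (beta - INR (flr beta))).

Definition mean01 (V : R -> R) : R := RInt V 0 1.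

Definition L2dist_to_mean (V : R -> R) : R :=
  sqrt (RInt (fun x => (V x - mean01 V) ^ 2) 0 1).

Definition Vclass (beta M eps : R) (V : R -> R) : Prop :=
  Holder beta M V /\ (forall x, 0 <= x <= 1 -> 0 <= V x) /\ eps <= L2dist_to_mean V.

Definition psij (psi : R -> R) (m j : nat) (x : R) : R :=
  sqrt (INR m) * psi (INR m * x - INR j + 1).

Definition Vkappa (psi : R -> R) (m : nat) (rho : R) (kappa : nat -> R) (x : R) : R :=
  1 + rho * sum_n_m (fun j => kappa j * psij psi m j x) 1 m.

(* Main.v *)
Require Import Defs.
From Stdlib Require Import Reals Lra Lia ZArith.
From Coquelicot Require Import Coquelicot.
Open Scope R_scope.

Lemma dn_zero_out (psi : R -> R) :
  (forall x, psi x <> 0 -> 0 <= x <= 1) ->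
  forall k y, (y < 0 \/ 1 < y) -> Derive_n psi k y = 0.
Proof.
  intros Hsupp k. induction k as [|k IH]; intros y Hy.
  - simpl. destruct (Req_dec (psi y) 0) as [E|E]; auto. apply Hsupp in E. lra.
  - simpl. rewrite (Derive_ext_loc _ (fun _ => 0)). apply Derive_const.
    destruct Hy as [Hy|Hy].
    + assert (He : 0 < - y / 2) by lra.
      exists (mkposreal _ He). intros t Ht. apply IH. left.
      unfold ball in Ht; simpl in Ht; unfold AbsRing_ball, abs, minus, plus, opp in Ht; simpl in Ht.
      apply Rabs_lt_between in Ht. lra.
    + assert (He : 0 < (y - 1) / 2) by lra.
      exists (mkposreal _ He). intros t Ht. apply IH. right.
      unfold ball in Ht; simpl in Ht; unfold AbsRing_ball, abs, minus, plus, opp in Ht; simpl in Ht.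
      apply Rabs_lt_between in Ht. lra.
Qed.

Lemma dn_cont (psi : R -> R) : smooth psi -> forall k y, continuous (Derive_n psi k) y.
Proof. intros Hs k y. apply (@ex_derive_continuous R_AbsRing R_NormedModule). apply (Hs (S k) y). Qed.

Lemma dn_supp (psi : R -> R) : smooth psi ->
  (forall x, psi x <> 0 -> 0 <= x <= 1) ->
  forall k y, Derive_n psi k y <> 0 -> 0 < y < 1.
Proof.
  intros Hs Hsupp k y Hne.
  assert (Hc := proj2 (continuity_pt_filterlim _ _) (dn_cont psi Hs k y)).
  destruct (Rlt_or_le 0 y); destruct (Rlt_or_le y 1); try lra.
  - exfalso. destruct (continuous_neq_0 _ _ Hc Hne) as [eps He].
    apply (He (eps/2)). destruct eps; simpl; rewrite Rabs_pos_eq; lra.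
    apply dn_zero_out; auto. destruct eps; simpl in *; lra.
  - exfalso. destruct (continuous_neq_0 _ _ Hc Hne) as [eps He].
    apply (He (-(eps/2))). destruct eps; simpl; rewrite Rabs_Ropp, Rabs_pos_eq; lra.
    apply dn_zero_out; auto. destruct eps; simpl in *; lra.
Qed.

Lemma supnorm_bound (f : R -> R) :
  (forall y, continuous f y) -> (forall y, f y <> 0 -> 0 <= y <= 1) ->
  forall x, Rabs (f x) <= supnorm f.
Proof.
  intros Hc Hs.
  destruct (continuity_ab_maj (fun t => Rabs (f t)) 0 1) as [Mx [HM _]]; [lra| |].
  { intros c _. apply continuity_pt_filterlim. apply continuous_Rabs_comp. apply Hc. }
  assert (Hb : forall x, Rabs (f x) <= Rabs (f Mx)).
  { intros x. destruct (Req_dec (f x) 0) as [E|E].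
    - rewrite E, Rabs_R0. apply Rabs_pos.
    - apply HM. apply Hs. auto. }
  unfold supnorm. destruct (Lub_Rbar_correct (fun y => exists x, y = Rabs (f x))) as [Hub Hlub].
  assert (H1 : Rbar_le (Lub_Rbar (fun y => exists x, y = Rabs (f x))) (Rabs (f Mx))).
  { apply Hlub. intros y [x ->]. simpl. apply Hb. }
  intros x.
  assert (H2 : Rbar_le (Rabs (f x)) (Lub_Rbar (fun y => exists x, y = Rabs (f x)))).
  { apply Hub. exists x. reflexivity. }
  destruct (Lub_Rbar (fun y => exists x, y = Rabs (f x))); simpl in *; tauto.
Qed.

Definition uniqnz (f : nat -> R) (a b : nat) : Prop :=
  forall i i', (a <= i <= b)%nat -> (a <= i' <= b)%nat -> f i <> 0 -> f i' <> 0 -> i = i'.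

Lemma sum_allzero (f : nat -> R) a b :
  (forall i, (a <= i <= b)%nat -> f i = 0) -> sum_n_m f a b = 0.
Proof.
  intros H. rewrite (sum_n_m_ext_loc _ (fun _ => zero)). apply (@sum_n_m_const_zero R_AbelianMonoid).
  intros k Hk. rewrite H; auto.
Qed.

Lemma sum_last (f : nat -> R) a n :
  sum_n_m f a (S (a + n)) = sum_n_m f a (a + n) + f (S (a + n)).
Proof. rewrite sum_n_Sm; [reflexivity| lia]. Qed.

Lemma sum_single_aux (f : nat -> R) a n :
  uniqnz f a (a + n) ->
  (forall i, (a <= i <= a + n)%nat -> f i = 0) \/
  (exists i0, (a <= i0 <= a + n)%nat /\ sum_n_m f a (a + n) = f i0).
Proof.
  induction n as [|n IH]; intros H.
  - right. exists a. split. lia. rewrite Nat.add_0_r. apply sum_n_n.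
  - assert (H' : uniqnz f a (a + n)).
    { intros i i' Hi Hi'. apply H; lia. }
    rewrite Nat.add_succ_r, sum_last.
    destruct (Req_dec (f (S (a + n))) 0) as [E|E].
    + rewrite E, Rplus_0_r. destruct (IH H') as [Z|[i0 [Hi0 Hs]]].
      * left. intros i Hi. destruct (Nat.eq_dec i (S (a+n))). subst; auto. apply Z; lia.
      * right. exists i0. split. lia. auto.
    + right. exists (S (a + n)). split. lia.
      rewrite sum_allzero. lra. intros i Hi.
      destruct (Req_dec (f i) 0) as [E'|E']; auto.
      assert (i = S (a + n)) by (apply H; auto; lia). lia.
Qed.

Lemma sum_single_bound (f : nat -> R) a n B :
  uniqnz f a (a + n) -> (forall i, (a <= i <= a + n)%nat -> Rabs (f i) <= B) -> 0 <= B ->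
  Rabs (sum_n_m f a (a + n)) <= B.
Proof.
  intros H Hb HB. destruct (sum_single_aux f a n H) as [Z|[i0 [Hi Hs]]].
  - rewrite sum_allzero; auto. rewrite Rabs_R0; auto.
  - rewrite Hs. auto.
Qed.

Lemma sum_single_sq (f : nat -> R) a n :
  uniqnz f a (a + n) ->
  (sum_n_m f a (a + n)) ^ 2 = sum_n_m (fun i => (f i) ^ 2) a (a + n).
Proof.
  induction n as [|n IH]; intros H.
  - rewrite Nat.add_0_r, !sum_n_n. reflexivity.
  - assert (H' : uniqnz f a (a + n)).
    { intros i i' Hi Hi'. apply H; lia. }
    rewrite Nat.add_succ_r, !sum_last, <- IH by auto.
    destruct (Req_dec (f (S (a + n))) 0) as [E|E].
    + rewrite E. ring.
    + rewrite sum_allzero. ring. intros i Hi.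
      destruct (Req_dec (f i) 0) as [E'|E']; auto.
      assert (i = S (a + n)) by (apply H; auto; lia). lia.
Qed.

Lemma is_derive_sum (g : nat -> R -> R) (dg : nat -> R) x a b :
  (forall j, (a <= j <= b)%nat -> is_derive (g j) x (dg j)) ->
  is_derive (fun t => sum_n_m (fun j => g j t) a b) x (sum_n_m dg a b).
Proof.
  induction b as [|b IH]; intros H.
  - destruct a.
    + apply (is_derive_ext (g 0%nat)). intros t. rewrite sum_n_n. reflexivity.
      rewrite sum_n_n. apply H. lia.
    + apply (is_derive_ext (fun _ => 0)). intros t. rewrite sum_n_m_zero by lia. reflexivity.
      rewrite sum_n_m_zero by lia. apply (@is_derive_const R_AbsRing R_NormedModule).
  - destruct (Compare_dec.le_lt_dec a (S b)).
    + apply (is_derive_ext (fun t => plus (sum_n_m (fun j => g j t) a b) (g (S b) t))).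
      intros t. rewrite sum_n_Sm by lia. reflexivity.
      rewrite sum_n_Sm by lia. apply (@is_derive_plus R_AbsRing R_NormedModule).
      apply IH. intros; apply H; lia. apply H; lia.
    + apply (is_derive_ext (fun _ => 0)). intros t. rewrite sum_n_m_zero by lia. reflexivity.
      rewrite sum_n_m_zero by lia. apply (@is_derive_const R_AbsRing R_NormedModule).
Qed.

Definition W (psi : R -> R) (m : nat) (kappa : nat -> R) (k : nat) (x : R) : R :=
  sum_n_m (fun j => kappa j * (sqrt (INR m) * Derive_n psi k (INR m * x - INR j + 1))) 1 m.

Lemma W_derive psi m kappa k x : smooth psi ->
  is_derive (W psi m kappa k) x (INR m * W psi m kappa (S k) x).
Proof.
  intros Hs. unfold W.
  rewrite <- (sum_n_m_mult_l (K := R_Ring)).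
  apply (is_derive_sum (fun j t => kappa j * (sqrt (INR m) * Derive_n psi k (INR m * t - INR j + 1)))).
  intros j _.
  assert (H1 : is_derive (fun t => INR m * t - INR j + 1) x (INR m)).
  { auto_derive. auto. ring. }
  assert (H2 := is_derive_comp (Derive_n psi k) (fun t => INR m * t - INR j + 1) x _ _
     (Derive_correct _ _ (Hs (S k) (INR m * x - INR j + 1))) H1).
  apply (is_derive_scal _ _ (sqrt (INR m))) in H2.
  apply (is_derive_scal _ _ (kappa j)) in H2.
  simpl in H2. unfold scal in H2; simpl in H2; unfold mult in H2; simpl in H2.
  unfold mult; simpl.
  replace (INR m * (kappa j * (sqrt (INR m) * Derive (Derive_n psi k) (INR m * x - INR j + 1))))
   with (kappa j * (sqrt (INR m) * (INR m * Derive (Derive_n psi k) (INR m * x - INR j + 1)))) by ring.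
  exact H2.
Qed.

Lemma V_eq psi m rho kappa x : Vkappa psi m rho kappa x = 1 + rho * W psi m kappa 0 x.
Proof. reflexivity. Qed.

Lemma V_derive psi m rho kappa x : smooth psi ->
  is_derive (Vkappa psi m rho kappa) x (rho * (INR m * W psi m kappa 1 x)).
Proof.
  intros Hs. apply (is_derive_ext (fun t => plus 1 (rho * W psi m kappa 0 t))).
  intros t; reflexivity.
  replace (rho * (INR m * W psi m kappa 1 x)) with (plus 0 (rho * (INR m * W psi m kappa 1 x))).
  2: { unfold plus; simpl. ring. }
  apply (@is_derive_plus R_AbsRing R_NormedModule).
  apply (@is_derive_const R_AbsRing R_NormedModule).
  apply is_derive_scal. apply W_derive; auto.
Qed.

Lemma DnV psi m rho kappa : smooth psi -> forall k x,
  Derive_n (Vkappa psi m rho kappa) (S k) x = rho * INR m ^ (S k) * W psi m kappa (S k) x.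
Proof.
  intros Hs k. induction k as [|k IH]; intros x.
  - change (Derive (Vkappa psi m rho kappa) x = rho * INR m ^ 1 * W psi m kappa 1 x). rewrite (is_derive_unique _ _ _ (V_derive psi m rho kappa x Hs)). simpl. ring.
  - change (Derive_n (Vkappa psi m rho kappa) (S (S k)) x)
      with (Derive (Derive_n (Vkappa psi m rho kappa) (S k)) x).
    rewrite (Derive_ext _ _ _ IH).
    apply is_derive_unique.
    replace (rho * INR m ^ S (S k) * W psi m kappa (S (S k)) x)
      with (rho * INR m ^ S k * (INR m * W psi m kappa (S (S k)) x)) by (simpl; ring).
    apply is_derive_scal. apply W_derive; auto.
Qed.

Lemma DnV_derive psi m rho kappa : smooth psi -> forall k x,
  is_derive (Derive_n (Vkappa psi m rho kappa) k) x
            (Derive_n (Vkappa psi m rho kappa) (S k) x).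
Proof.
  intros Hs k x. destruct k as [|k].
  - simpl Derive_n at 1. rewrite (DnV _ _ _ _ Hs 0). 
    replace (rho * INR m ^ 1 * W psi m kappa 1 x) with (rho * (INR m * W psi m kappa 1 x)) by ring.
    apply V_derive; auto.
  - apply (is_derive_ext (fun t => rho * INR m ^ (S k) * W psi m kappa (S k) t)).
    intros t; rewrite DnV; auto.
    rewrite DnV by auto.
    replace (rho * INR m ^ S (S k) * W psi m kappa (S (S k)) x)
      with (rho * INR m ^ S k * (INR m * W psi m kappa (S (S k)) x)) by (simpl; ring).
    apply is_derive_scal. apply W_derive; auto.
Qed.

Lemma DnV_diff psi m rho kappa : smooth psi -> forall k x y,
  Derive_n (Vkappa psi m rho kappa) k x - Derive_n (Vkappa psi m rho kappa) k y
  = rho * INR m ^ k * (W psi m kappa k x - W psi m kappa k y).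
Proof.
  intros Hs [|k] x y.
  - simpl. rewrite !V_eq. ring.
  - rewrite !DnV by auto. ring.
Qed.

Lemma nat_close (i i' : nat) : INR i - INR i' < 1 -> INR i' - INR i < 1 -> i = i'.
Proof.
  intros H1 H2. destruct (Compare_dec.lt_eq_lt_dec i i') as [[L|E]|L]; auto.
  - apply le_INR in L. rewrite S_INR in L. lra.
  - apply le_INR in L. rewrite S_INR in L. lra.
Qed.

Lemma uniq_terms (h : R -> R) (c : nat -> R) (s a : R) lo hi :
  (forall y, h y <> 0 -> 0 < y < 1) ->
  uniqnz (fun j => c j * (s * h (a - INR j + 1))) lo hi.
Proof.
  intros Hh i i' _ _ Hi Hi'.
  assert (A : h (a - INR i + 1) <> 0) by (intro E; apply Hi; rewrite E; ring).
  assert (B : h (a - INR i' + 1) <> 0) by (intro E; apply Hi'; rewrite E; ring).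
  apply Hh in A. apply Hh in B. apply nat_close; lra.
Qed.

Lemma sum_single_bound' (f : nat -> R) a b B :
  (a <= b)%nat ->
  uniqnz f a b -> (forall i, (a <= i <= b)%nat -> Rabs (f i) <= B) -> 0 <= B ->
  Rabs (sum_n_m f a b) <= B.
Proof.
  intros Hab. replace b with (a + (b - a))%nat by lia. apply sum_single_bound.
Qed.

Lemma sum_single_sq' (f : nat -> R) a b :
  (a <= b)%nat -> uniqnz f a b ->
  (sum_n_m f a b) ^ 2 = sum_n_m (fun i => (f i) ^ 2) a b.
Proof.
  intros Hab. replace b with (a + (b - a))%nat by lia. apply sum_single_sq.
Qed.

Lemma supnorm_nonneg (f : R -> R) :
  (forall y, continuous f y) -> (forall y, f y <> 0 -> 0 <= y <= 1) -> 0 <= supnorm f.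
Proof.
  intros Hc Hs. apply Rle_trans with (Rabs (f 0)). apply Rabs_pos. apply supnorm_bound; auto.
Qed.

Lemma W_bound psi m kappa k x : smooth psi ->
  (forall x, psi x <> 0 -> 0 <= x <= 1) -> (0 < m)%nat ->
  (forall j, (1 <= j <= m)%nat -> kappa j = 1 \/ kappa j = -1) ->
  Rabs (W psi m kappa k x) <= sqrt (INR m) * supnorm (Derive_n psi k).
Proof.
  intros Hs Hsupp Hm Hk. unfold W.
  assert (Hc := dn_cont psi Hs k).
  assert (Hsp : forall y, Derive_n psi k y <> 0 -> 0 <= y <= 1).
  { intros y Hy. apply (dn_supp psi Hs Hsupp) in Hy. lra. }
  apply sum_single_bound'. lia.
  apply uniq_terms. apply dn_supp; auto.
  intros i Hi. rewrite !Rabs_mult.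
  assert (Ek : Rabs (kappa i) = 1).
  { destruct (Hk i Hi) as [E|E]; rewrite E; [apply Rabs_R1| rewrite Rabs_left; lra]. }
  rewrite Ek, Rabs_pos_eq by apply sqrt_pos. rewrite Rmult_1_l.
  apply Rmult_le_compat_l; try apply sqrt_pos; apply supnorm_bound; auto.
  apply Rmult_le_pos. apply sqrt_pos. apply supnorm_nonneg; auto.
Qed.

Lemma is_RInt_val (f : R -> R) a b l l' : is_RInt f a b l -> l = l' -> is_RInt f a b l'.
Proof. intros H ->; exact H. Qed.

Lemma is_RInt_zero_on (g : R -> R) a b : a <= b ->
  (forall x, a < x < b -> g x = 0) -> is_RInt g a b 0.
Proof.
  intros Hab H. apply (is_RInt_ext (fun _ => 0)).
  intros x Hx. rewrite Rmin_left, Rmax_right in Hx by lra. symmetry; apply H; lra.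
  eapply is_RInt_val. apply (@is_RInt_const R_NormedModule). unfold scal; simpl; unfold mult; simpl. ring.
Qed.

Lemma int_shift (g : R -> R) (m j : nat) :
  (forall y, continuous g y) -> (forall y, g y <> 0 -> 0 <= y <= 1) ->
  (1 <= j <= m)%nat ->
  is_RInt (fun x => g (INR m * x - INR j + 1)) 0 1 (/ INR m * RInt g 0 1).
Proof.
  intros Hc Hs Hj.
  assert (Hj1 : 1 <= INR j) by (apply (le_INR 1); lia).
  assert (Hjm : INR j <= INR m) by (apply le_INR; lia).
  assert (Hz : forall y, (y < 0 \/ 1 < y) -> g y = 0).
  { intros y Hy. destruct (Req_dec (g y) 0); auto. apply Hs in H. lra. }
  assert (I0 : is_RInt g 0 1 (RInt g 0 1)).
  { apply (@RInt_correct R_CompleteNormedModule). apply ex_RInt_continuous. intros; apply Hc. }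
  assert (I1 : is_RInt g (1 - INR j) 0 0).
  { apply is_RInt_zero_on. lra. intros x Hx. apply Hz. lra. }
  assert (I2 : is_RInt g 1 (INR m - INR j + 1) 0).
  { apply is_RInt_zero_on. lra. intros x Hx. apply Hz. lra. }
  assert (I3 := is_RInt_Chasles _ _ _ _ _ _ (is_RInt_Chasles _ _ _ _ _ _ I1 I0) I2).
  assert (I4 : is_RInt g (INR m * 0 + (1 - INR j)) (INR m * 1 + (1 - INR j)) (RInt g 0 1)).
  { replace (INR m * 0 + (1 - INR j)) with (1 - INR j) by ring.
    replace (INR m * 1 + (1 - INR j)) with (INR m - INR j + 1) by ring.
    eapply is_RInt_val. exact I3. unfold plus; simpl. ring. }
  apply is_RInt_comp_lin in I4.
  apply (is_RInt_scal _ _ _ (/ INR m)) in I4.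
  eapply is_RInt_ext. 2: exact I4.
  intros x _. unfold scal; simpl; unfold mult; simpl. field_simplify_eq.
  f_equal. ring. apply not_O_INR. lia.
Qed.

Lemma is_RInt_sum (g : nat -> R -> R) (I : nat -> R) a b lo hi :
  (forall j, (lo <= j <= hi)%nat -> is_RInt (g j) a b (I j)) ->
  is_RInt (fun t => sum_n_m (fun j => g j t) lo hi) a b (sum_n_m I lo hi).
Proof.
  induction hi as [|hi IH]; intros H.
  - destruct lo.
    + apply (is_RInt_ext (g 0%nat)). intros t _. rewrite sum_n_n. reflexivity.
      rewrite sum_n_n. apply H. lia.
    + apply (is_RInt_ext (fun _ => 0)). intros t _. rewrite sum_n_m_zero by lia. reflexivity.
      rewrite sum_n_m_zero by lia.
      eapply is_RInt_val. apply (@is_RInt_const R_NormedModule). unfold scal, zero; simpl; unfold mult; simpl. ring.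
  - destruct (Compare_dec.le_lt_dec lo (S hi)).
    + apply (is_RInt_ext (fun t => plus (sum_n_m (fun j => g j t) lo hi) (g (S hi) t))).
      intros t _. rewrite sum_n_Sm by lia. reflexivity.
      rewrite sum_n_Sm by lia. apply (@is_RInt_plus R_NormedModule).
      apply IH. intros; apply H; lia. apply H; lia.
    + apply (is_RInt_ext (fun _ => 0)). intros t _. rewrite sum_n_m_zero by lia. reflexivity.
      rewrite sum_n_m_zero by lia.
      eapply is_RInt_val. apply (@is_RInt_const R_NormedModule). unfold scal, zero; simpl; unfold mult; simpl. ring.
Qed.

Ltac req := match goal with |- ?x = ?y => change (@eq R x y) end.

Lemma is_RInt_scal' (f : R -> R) a b k l : is_RInt f a b l -> is_RInt (fun y => k * f y) a b (k * l).
Proof. intros H. apply (is_RInt_scal _ _ _ k) in H. exact H. Qed.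

Lemma psi_cont (psi : R -> R) : smooth psi -> forall y, continuous psi y.
Proof. intros Hs y. apply (dn_cont psi Hs 0). Qed.

Lemma mean_V psi m rho kappa : smooth psi ->
  (forall x, psi x <> 0 -> 0 <= x <= 1) -> RInt psi 0 1 = 0 -> (0 < m)%nat ->
  mean01 (Vkappa psi m rho kappa) = 1.
Proof.
  intros Hs Hsupp H0 Hm. unfold mean01. apply is_RInt_unique.
  apply (is_RInt_ext (fun t => plus 1 (rho * W psi m kappa 0 t))).
  intros; reflexivity.
  eapply is_RInt_val. apply (@is_RInt_plus R_NormedModule).
  apply (@is_RInt_const R_NormedModule).
  apply is_RInt_scal'. unfold W.
  apply (is_RInt_sum (fun j t => kappa j * (sqrt (INR m) * Derive_n psi 0 (INR m * t - INR j + 1))) (fun _ => 0)).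
  intros j Hj. eapply is_RInt_val. apply is_RInt_scal'. apply is_RInt_scal'.
  apply (int_shift psi m j (psi_cont psi Hs) Hsupp Hj).
  simpl. rewrite H0. ring.
  rewrite sum_n_m_const. unfold plus, scal; simpl; unfold mult; simpl. ring.
Qed.

Lemma L2_V psi m rho kappa : smooth psi ->
  (forall x, psi x <> 0 -> 0 <= x <= 1) -> RInt psi 0 1 = 0 ->
  RInt (fun x => psi x ^ 2) 0 1 = 1 -> (0 < m)%nat ->
  (forall j, (1 <= j <= m)%nat -> kappa j = 1 \/ kappa j = -1) ->
  RInt (fun x => (Vkappa psi m rho kappa x - mean01 (Vkappa psi m rho kappa)) ^ 2) 0 1
  = rho ^ 2 * INR m.
Proof.
  intros Hs Hsupp H0 H1 Hm Hk. rewrite mean_V by auto. apply is_RInt_unique.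
  apply (is_RInt_ext (fun t => rho ^ 2 * sum_n_m (fun j => (kappa j * (sqrt (INR m) * Derive_n psi 0 (INR m * t - INR j + 1))) ^ 2) 1 m)).
  { intros t _. rewrite V_eq. unfold W. rewrite <- sum_single_sq'. match goal with |- _ * ?a ^ 2 = _ => generalize a end. intros s0. match goal with |- ?x = ?y => change (@eq R x y) end. ring. lia.
    apply uniq_terms. apply dn_supp; auto. }
  apply is_RInt_scal'.
  eapply is_RInt_val.
  apply (is_RInt_sum _ (fun _ => 1)).
  2: { rewrite sum_n_m_const. req. replace (S m - 1)%nat with m by lia. ring. }
  intros j Hj.
  assert (Ek : kappa j ^ 2 = 1) by (destruct (Hk j Hj) as [E|E]; rewrite E; ring).
  apply (is_RInt_ext (fun t => INR m * (fun y => psi y ^ 2) (INR m * t - INR j + 1))).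
  { intros t _. req. cbv beta.
    change (Derive_n psi 0 (INR m * t - INR j + 1)) with (psi (INR m * t - INR j + 1)).
    set (y := INR m * t - INR j + 1).
    assert (Hsq : sqrt (INR m) ^ 2 = INR m).
    { rewrite <- Rsqr_pow2. apply Rsqr_sqrt. apply pos_INR. }
    transitivity (kappa j ^ 2 * (sqrt (INR m) ^ 2 * psi y ^ 2)).
    rewrite Ek, Hsq. ring. ring. }
  apply (is_RInt_val _ _ _ (INR m * (/ INR m * RInt (fun y => psi y ^ 2) 0 1))).
  apply is_RInt_scal'. apply (int_shift (fun y => psi y ^ 2) m j).
  - intros y. apply continuity_pt_filterlim.
    assert (Hc : continuity_pt psi y) by (apply continuity_pt_filterlim; apply psi_cont; auto).
    apply (continuity_pt_ext (fun y => psi y * (psi y * 1))).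
    intros x0. ring.
    apply continuity_pt_mult. auto. apply continuity_pt_mult. auto. apply continuity_pt_const. intros a b; reflexivity.
  - intros y Hy. apply Hsupp. intro E. apply Hy. rewrite E. ring.
  - auto.
  - rewrite H1. req. field. apply not_O_INR. lia.
Qed.

Lemma flr_facts b : 0 < b -> INR (flr b) <= b < INR (flr b) + 1.
Proof.
  intros Hb. unfold flr. destruct (base_Int_part b) as [H1 H2].
  assert (Hz : (0 <= Int_part b)%Z).
  { assert (-1 < Int_part b)%Z by (apply lt_IZR; lra). lia. }
  rewrite INR_IZR_INZ, Z2Nat.id by auto. lra.
Qed.

Lemma Rpower_half_nat (mm : R) q : 0 < mm -> Rpower mm (/2 + INR q) = sqrt mm * mm ^ q.
Proof. intros H. rewrite Rpower_plus, Rpower_sqrt, Rpower_pow; auto. Qed.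

Lemma Rpower_1_l c : Rpower 1 c = 1.
Proof. unfold Rpower. rewrite ln_1, Rmult_0_r, exp_0. reflexivity. Qed.

Lemma Rpower_pos' x c : 0 < Rpower x c.
Proof. unfold Rpower. apply exp_pos. Qed.

Lemma holder_core (mm d al A sK sK1 M D : R) :
  1 <= mm -> 0 <= al < 1 -> 0 < d -> 0 <= A -> 0 <= sK -> 0 <= sK1 -> 1 <= M -> 0 <= D ->
  A * Rpower mm al * (4 * sK) <= 1 -> A * Rpower mm al * (2 * sK1) <= 1 ->
  D <= 2 * A * sK -> (d < / mm -> D <= A * mm * sK1 * d) ->
  D <= M * Rpower d al.
Proof.
  intros Hm Hal Hd HA HsK HsK1 HM HD H4 H2 Hc1 Hc2.
  set (P := Rpower mm al) in *. set (Q := Rpower d al) in *.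
  assert (HP : 0 < P) by apply Rpower_pos'.
  assert (HQ : 0 < Q) by apply Rpower_pos'.
  assert (Hmp : 0 < mm) by lra.
  enough (D <= Q / 2) by nra.
  destruct (Rlt_or_le d (/ mm)) as [Hlt|Hge].
  - specialize (Hc2 Hlt).
    set (E := Rpower (mm * d) (1 - al)).
    assert (HE : E <= 1).
    { unfold E. apply Rle_trans with (Rpower 1 (1 - al)); [|rewrite Rpower_1_l; lra].
      apply Rle_Rpower_l. lra. split. nra.
      apply Rmult_le_reg_l with (/ mm). apply Rinv_0_lt_compat; lra.
      rewrite <- Rmult_assoc, Rinv_l, Rmult_1_l, Rmult_1_r; lra. }
    assert (HEQP : E * Q * P = mm * d).
    { unfold E, Q, P. rewrite <- Rpower_mult_distr by nra.
      replace (Rpower mm (1 - al) * Rpower d (1 - al) * Rpower d al * Rpower mm al)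
        with ((Rpower mm (1 - al) * Rpower mm al) * (Rpower d (1 - al) * Rpower d al)) by ring.
      rewrite <- !Rpower_plus. replace (1 - al + al) with 1 by ring.
      rewrite !Rpower_1; lra. }
    assert (HE0 : 0 <= E) by (unfold E; left; apply Rpower_pos').
    apply Rle_trans with (A * mm * sK1 * d); auto.
    replace (A * mm * sK1 * d) with (A * sK1 * (mm * d)) by ring. rewrite <- HEQP.
    replace (A * sK1 * (E * Q * P)) with ((A * P * sK1) * E * Q) by ring.
    assert (A * P * sK1 <= / 2) by (replace (A * P * sK1) with (/2 * (A * P * (2 * sK1))) by field; lra).
    assert (0 <= A * P * sK1) by (apply Rmult_le_pos; [apply Rmult_le_pos|]; lra).
    apply Rle_trans with (/2 * E * Q).
    apply Rmult_le_compat_r. lra. apply Rmult_le_compat_r; lra.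
    apply Rle_trans with (/2 * 1 * Q). apply Rmult_le_compat_r. lra. apply Rmult_le_compat_l; lra. lra.
  - assert (HQP : Rpower (/ mm) al * P = 1).
    { unfold P. rewrite Rpower_mult_distr. rewrite Rinv_l by lra. apply Rpower_1_l.
      apply Rinv_0_lt_compat; lra. lra. }
    assert (HQ' : Rpower (/ mm) al <= Q).
    { unfold Q. apply Rle_Rpower_l. lra. split; auto. apply Rinv_0_lt_compat; lra. }
    assert (2 * A * sK * P <= / 2) by (replace (2 * A * sK * P) with (/2 * (A * P * (4 * sK))) by field; lra).
    assert (0 <= Rpower (/ mm) al) by (left; apply Rpower_pos').
    apply Rle_trans with (2 * A * sK); auto.
    replace (2 * A * sK) with (2 * A * sK * P * Rpower (/ mm) al) by (rewrite Rmult_assoc, (Rmult_comm P), HQP; ring).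
    apply Rle_trans with (/2 * Rpower (/ mm) al). apply Rmult_le_compat_r; lra. lra.
Qed.

Theorem proposition7p2 :
  exists M0 : R, 1 <= M0 /\
  forall M : R, M0 <= M ->
  forall (beta : R) (psi : R -> R) (m : nat) (rho : R) (kappa : nat -> R),
    0 < beta ->
    smooth psi ->
    (forall x, psi x <> 0 -> 0 <= x <= 1) ->
    RInt (fun x => psi x ^ 2) 0 1 = 1 ->
    RInt psi 0 1 = 0 ->
    (0 < m)%nat ->
    0 < rho ->
    (forall j, (1 <= j <= m)%nat -> kappa j = 1 \/ kappa j = -1) ->
    (forall q, (q <= flr beta)%nat ->
       rho * Rpower (INR m) (/2 + INR q) * supnorm (Derive_n psi q) <= 1) ->
    rho * Rpower (INR m) (/2 + beta) *
      Rmax (4 * supnorm (Derive_n psi (flr beta)))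
           (2 * supnorm (Derive_n psi (S (flr beta)))) <= 1 ->
    Vclass beta M (sqrt (INR m) * rho) (Vkappa psi m rho kappa).
Proof.
  exists 2. split. lra.
  intros M HM beta psi m rho kappa Hbeta Hs Hsupp H1 H0 Hm Hrho Hk Hq Hb.
  assert (Hm1 : 1 <= INR m) by (apply (le_INR 1); lia).
  assert (Hmp : 0 < INR m) by lra.
  assert (Hsq : 0 <= sqrt (INR m)) by apply sqrt_pos.
  destruct (flr_facts beta Hbeta) as [HK1 HK2].
  set (K := flr beta) in *.
  set (al := beta - INR K).
  assert (Hsp : forall k y, Derive_n psi k y <> 0 -> 0 <= y <= 1).
  { intros k y Hy. apply (dn_supp psi Hs Hsupp) in Hy. lra. }
  assert (Hs0 : forall k, 0 <= supnorm (Derive_n psi k)).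
  { intros k. apply supnorm_nonneg. apply dn_cont; auto. apply Hsp. }
  assert (HW : forall k x, Rabs (W psi m kappa k x) <= sqrt (INR m) * supnorm (Derive_n psi k)).
  { intros k x. apply W_bound; auto. }
  assert (Hq' : forall q, (q <= K)%nat ->
     rho * (sqrt (INR m) * INR m ^ q) * supnorm (Derive_n psi q) <= 1).
  { intros q Hqk. rewrite <- Rpower_half_nat by auto. apply Hq; auto. }
  assert (HbP : Rpower (INR m) (/2 + beta) = sqrt (INR m) * INR m ^ K * Rpower (INR m) al).
  { replace (/2 + beta) with ((/2 + INR K) + al) by (unfold al; ring).
    rewrite Rpower_plus, Rpower_half_nat; auto. }
  rewrite HbP in Hb.
  assert (HPpos : 0 < Rpower (INR m) al) by apply Rpower_pos'.
  assert (HmK : 0 < INR m ^ K) by (apply pow_lt; lra).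
  assert (Hc0 : 0 <= rho * (sqrt (INR m) * INR m ^ K * Rpower (INR m) al)).
  { apply Rmult_le_pos. lra. apply Rmult_le_pos; [apply Rmult_le_pos|]; lra. }
  assert (H4 : rho * sqrt (INR m) * INR m ^ K * Rpower (INR m) al * (4 * supnorm (Derive_n psi K)) <= 1).
  { eapply Rle_trans; [|exact Hb].
    replace (rho * sqrt (INR m) * INR m ^ K * Rpower (INR m) al * (4 * supnorm (Derive_n psi K)))
      with (rho * (sqrt (INR m) * INR m ^ K * Rpower (INR m) al) * (4 * supnorm (Derive_n psi K))) by ring.
    apply Rmult_le_compat_l. exact Hc0. apply Rmax_l. }
  assert (H2 : rho * sqrt (INR m) * INR m ^ K * Rpower (INR m) al * (2 * supnorm (Derive_n psi (S K))) <= 1).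
  { eapply Rle_trans; [|exact Hb].
    replace (rho * sqrt (INR m) * INR m ^ K * Rpower (INR m) al * (2 * supnorm (Derive_n psi (S K))))
      with (rho * (sqrt (INR m) * INR m ^ K * Rpower (INR m) al) * (2 * supnorm (Derive_n psi (S K)))) by ring.
    apply Rmult_le_compat_l. exact Hc0. apply Rmax_r. }
  split; [|split].
  -
    split; [|split].
    + intros k x _ _. destruct k as [|k]. exact I.
      simpl. eexists. apply DnV_derive; auto.
    + intros k x Hk' _. destruct k as [|k].
      * change (Rabs (Vkappa psi m rho kappa x) <= M). rewrite V_eq.
        eapply Rle_trans. apply Rabs_triang. rewrite Rabs_R1, Rabs_mult, (Rabs_pos_eq rho) by lra.
        assert (rho * Rabs (W psi m kappa 0 x) <= 1).
        { eapply Rle_trans. apply Rmult_le_compat_l. lra. apply HW.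
          replace (rho * (sqrt (INR m) * supnorm (Derive_n psi 0))) with
            (rho * (sqrt (INR m) * INR m ^ 0) * supnorm (Derive_n psi 0)) by ring.
          apply Hq'. lia. }
        lra.
      * rewrite DnV by auto. rewrite Rabs_mult, Rabs_mult, Rabs_pos_eq, Rabs_pos_eq.
        2: (apply pow_le; lra). 2: lra.
        eapply Rle_trans. apply Rmult_le_compat_l. apply Rmult_le_pos. lra. apply pow_le; lra. apply HW.
        specialize (Hq' (S k) Hk'). 
        replace (rho * INR m ^ S k * (sqrt (INR m) * supnorm (Derive_n psi (S k))))
          with (rho * (sqrt (INR m) * INR m ^ S k) * supnorm (Derive_n psi (S k))) by ring.
        lra.
    + intros x y Hx Hy. rewrite DnV_diff by auto. change (flr beta) with K.
      rewrite Rabs_mult, Rabs_mult, Rabs_pos_eq, Rabs_pos_eq by (try apply pow_le; lra).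
      destruct (Req_dec x y) as [E|E].
      { subst y. rewrite Rminus_diag, Rabs_R0, Rmult_0_r.
        apply Rmult_le_pos. lra. left; apply Rpower_pos'. }
      apply (holder_core (INR m) (Rabs (x - y)) al (rho * sqrt (INR m) * INR m ^ K)
               (supnorm (Derive_n psi K)) (supnorm (Derive_n psi (S K)))); auto. all: try (unfold al; lra).
      * apply Rabs_pos_lt. lra.
      * apply Rmult_le_pos. apply Rmult_le_pos; lra. lra.
      * apply Rmult_le_pos. apply Rmult_le_pos; lra. apply Rabs_pos.
      * eapply Rle_trans. apply Rmult_le_compat_l. apply Rmult_le_pos; lra.
        unfold Rminus. eapply Rle_trans. apply Rabs_triang. rewrite Rabs_Ropp.
        apply Rplus_le_compat; apply HW.
        right; ring.
      * intros _.
        destruct (MVT_gen (W psi m kappa K) y x (fun t => INR m * W psi m kappa (S K) t)) as [c [_ Hc]].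
        { intros t _. apply W_derive; auto. }
        { intros t _. apply continuity_pt_filterlim.
          apply (@ex_derive_continuous R_AbsRing R_NormedModule). eexists. apply W_derive; auto. }
        rewrite Hc. rewrite !Rabs_mult, (Rabs_pos_eq (INR m)) by lra.
        assert (HWc := HW (S K) c).
        rewrite (Rabs_minus_sym x y).
        assert (0 <= Rabs (y - x)) by apply Rabs_pos.
        apply Rle_trans with (rho * INR m ^ K * (INR m * (sqrt (INR m) * supnorm (Derive_n psi (S K))) * Rabs (y - x))).
        apply Rmult_le_compat_l. apply Rmult_le_pos; lra.
        apply Rmult_le_compat_r. auto. apply Rmult_le_compat_l; lra.
        right; ring.
  - intros x _. rewrite V_eq.
    assert (HW0 := HW 0%nat x). apply Rabs_le_between in HW0.
    specialize (Hq' 0%nat ltac:(lia)).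
    replace (rho * (sqrt (INR m) * INR m ^ 0) * supnorm (Derive_n psi 0)) with
            (rho * (sqrt (INR m) * supnorm (Derive_n psi 0))) in Hq' by ring.
    assert (rho * W psi m kappa 0 x >= - (rho * (sqrt (INR m) * supnorm (Derive_n psi 0)))).
    { apply Rle_ge. replace (- (rho * (sqrt (INR m) * supnorm (Derive_n psi 0)))) with
        (rho * (- (sqrt (INR m) * supnorm (Derive_n psi 0)))) by ring.
      apply Rmult_le_compat_l; lra. }
    lra.
  - unfold L2dist_to_mean. rewrite L2_V by auto.
    rewrite sqrt_mult, sqrt_pow2; try lra. apply pow2_ge_0.
Qed.
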